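(* Let $P$ be a countable unital left cancellative semigroup, let $S$ be the inverse semigroup $\{v_{p_1}^*v_{q_1}\cdots v_{p_n}^*v_{q_n}: n\ge1,\ p_i,q_i\in P\}\cup\{0\}$ in $C^*(P)$ with idempotent semilattice $E=\{e_X:X\in\mathcal{J}(P)\}$, and let $\widehat{E}$ be the spectrum of $E$. Let $s\in S$ and let $\phi\in\widehat{E}$ be such that for all $X,Y\in\mathcal{J}(P)$ with $X\cup Y\in\mathcal{J}(P)$ one has $\phi(e_{X\cup Y})=\phi(e_X)+\phi(e_Y)-\phi(e_{X\cap Y})$. Then for all $X,Y\in\mathcal{J}(P)$ with $X\cup Y\in\mathcal{J}(P)$, $$\phi(s^*e_{X\cup Y}s)=\phi(s^*e_Xs)+\phi(s^*e_Ys)-\phi(s^*e_{X\cap Y}s).$$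
   Context: For $p\in P$, $pX$ is the image of $X\subseteq P$ under $q\mapsto pq$ and $p^{-1}X=\{q\in P:pq\in X\}$. The constructible right ideals are $\mathcal{J}(P)=\{p_1^{-1}q_1\cdots p_n^{-1}q_nP: n\ge1,\ p_i,q_i\in P\}\cup\{\emptyset\}$. $C^*(P)$ is the universal unital C*-algebra generated by isometries $\{v_p\}_{p\in P}$ and projections $\{e_X\}_{X\in\mathcal{J}(P)}$ with $v_pv_q=v_{pq}$, $v_pe_Xv_p^*=e_{pX}$, $e_\emptyset=0$, $e_P=1$, and $e_Xe_Y=e_{X\cap Y}$. Note $s^*es\in E$ for $s\in S$, $e\in E$. The spectrum $\widehat{E}$ is the set of nonzero maps $\phi:E\to\{0,1\}$ with $\phi(0)=0$ and $\phi(ef)=\phi(e)\phi(f)$. *)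

(* Defs.v *)
From HB Require Import structures.
From mathcomp Require Import all_boot all_algebra.
From mathcomp Require Import boolp classical_sets.
Set Implicit Arguments. Unset Strict Implicit. Unset Printing Implicit Defensive.
Import GRing.Theory.
Local Open Scope classical_set_scope.
Local Open Scope ring_scope.

Definition unital_left_cancellative (P : Type) (mul : P -> P -> P) (one : P) : Prop :=
  (forall a b c, mul a (mul b c) = mul (mul a b) c) /\
  (forall a, mul one a = a) /\ (forall a, mul a one = a) /\
  (forall a b c, mul a b = mul a c -> b = c).

Definition limg (P : Type) (mul : P -> P -> P) (p : P) (X : set P) : set P :=
  [set mul p x | x in X].
Definition lpre (P : Type) (mul : P -> P -> P) (p : P) (X : set P) : set P :=
  [set q | X (mul p q)].

(* For w = [:: (p1,q1); ...; (pn,qn)], the set p1^{-1} q1 ... pn^{-1} qn P. *)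
Fixpoint word_ideal (P : Type) (mul : P -> P -> P) (w : seq (P * P)) : set P :=
  match w with
  | [::] => setT
  | (p, q) :: w' => lpre mul p (limg mul q (word_ideal mul w'))
  end.

Definition constructible (P : Type) (mul : P -> P -> P) (X : set P) : Prop :=
  X = set0 \/ exists w : seq (P * P), w <> [::] /\ X = word_ideal mul w.

(* A ring R with an involution star (a *-ring), together with isometries v_p
   and projections e_X (X \in J(P)) satisfying the defining relations of C*(P). *)
Definition Cstar_P_relations (P : Type) (mul : P -> P -> P) (R : nzRingType)
  (star : R -> R) (v : P -> R) (e : set P -> R) : Prop :=
  (forall x y, star (x * y) = star y * star x) /\
  (forall x, star (star x) = x) /\
  (forall x y, star (x + y) = star x + star y) /\
  (forall p, star (v p) * v p = 1) /\
  (forall p q, v (mul p q) = v p * v q) /\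
  (forall X, constructible mul X -> star (e X) = e X) /\
  (forall p X, constructible mul X -> v p * e X * star (v p) = e (limg mul p X)) /\
  e set0 = 0 /\ e setT = 1 /\
  (forall X Y, constructible mul X -> constructible mul Y ->
     e X * e Y = e (X `&` Y)).

Fixpoint word_elt (P : Type) (R : nzRingType) (star : R -> R) (v : P -> R)
  (w : seq (P * P)) : R :=
  match w with
  | [::] => 1
  | (p, q) :: w' => star (v p) * v q * word_elt star v w'
  end.

Definition in_S (P : Type) (R : nzRingType) (star : R -> R) (v : P -> R) (s : R) : Prop :=
  s = 0 \/ exists w : seq (P * P), w <> [::] /\ s = word_elt star v w.

Definition in_E (P : Type) (mul : P -> P -> P) (R : nzRingType) (e : set P -> R) (x : R) : Prop :=
  exists X, constructible mul X /\ x = e X.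

(* phi \in \hat E : phi restricted to E is a nonzero multiplicative {0,1}-valued map
   with phi(0) = 0 (values of phi outside E are irrelevant). *)
Definition in_spectrum (P : Type) (mul : P -> P -> P) (R : nzRingType) (e : set P -> R)
  (phi : R -> int) : Prop :=
  [/\ (forall x, in_E mul e x -> phi x = 0 \/ phi x = 1),
      phi 0 = 0,
      (forall x y, in_E mul e x -> in_E mul e y -> phi (x * y) = phi x * phi y) &
      exists x, in_E mul e x /\ phi x <> 0].

(* Main.v *)
Require Import Defs.
From HB Require Import structures.
From mathcomp Require Import all_boot all_algebra.
From mathcomp Require Import boolp classical_sets.
Import GRing.Theory.
Local Open Scope classical_set_scope.
Local Open Scope ring_scope.
Set Implicit Arguments. Unset Strict Implicit.
Lemma lpre1 (P : Type) (mul : P -> P -> P) one (h1l : forall a, mul one a = a) Y :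
  lpre mul one Y = Y.
Proof. by apply/funext=> x; rewrite /lpre /= h1l. Qed.

Lemma limg1 (P : Type) (mul : P -> P -> P) one (h1l : forall a, mul one a = a) Y :
  Defs.limg mul one Y = Y.
Proof.
apply/seteqP; split=> x /=.
- by case=> z Yz <-; rewrite h1l.
- by move=> Yx; exists x => //; rewrite h1l.
Qed.

Lemma limg0 (P : Type) (mul : P -> P -> P) p : Defs.limg mul p set0 = set0.
Proof. by apply/seteqP; split=> x // [z]. Qed.
Lemma lpre0 (P : Type) (mul : P -> P -> P) p : lpre mul p set0 = set0.
Proof. by apply/seteqP; split=> x. Qed.

Lemma limgU (P : Type) (mul : P -> P -> P) p X Y :
  Defs.limg mul p (X `|` Y) = Defs.limg mul p X `|` Defs.limg mul p Y.
Proof.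
apply/seteqP; split=> x /=.
- by case=> z [Xz|Yz] <-; [left|right]; exists z.
- by case=> -[z Hz <-]; exists z => //; [left|right].
Qed.

Lemma limgI (P : Type) (mul : P -> P -> P) p
  (hcan : forall a b c, mul a b = mul a c -> b = c) X Y :
  Defs.limg mul p (X `&` Y) = Defs.limg mul p X `&` Defs.limg mul p Y.
Proof.
apply/seteqP; split=> x /=.
- by case=> z [Xz Yz] <-; split; exists z.
- case=> -[z Xz <-] [z' Yz' /hcan E]; exists z => //; split => //.
  by rewrite -E.
Qed.

Lemma lpreU (P : Type) (mul : P -> P -> P) p X Y :
  lpre mul p (X `|` Y) = lpre mul p X `|` lpre mul p Y.
Proof. by []. Qed.
Lemma lpreI (P : Type) (mul : P -> P -> P) p X Y :
  lpre mul p (X `&` Y) = lpre mul p X `&` lpre mul p Y.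
Proof. by []. Qed.

Lemma climg (P : Type) (mul : P -> P -> P) one (h1l : forall a, mul one a = a) p X :
  constructible mul X -> constructible mul (Defs.limg mul p X).
Proof.
case=> [->|[w [wn ->]]]; first by left; rewrite limg0.
by right; exists ((one, p) :: w); split => //=; rewrite lpre1.
Qed.

Lemma clpre (P : Type) (mul : P -> P -> P) one (h1l : forall a, mul one a = a) p X :
  constructible mul X -> constructible mul (lpre mul p X).
Proof.
case=> [->|[w [wn ->]]]; first by left; rewrite lpre0.
by right; exists ((p, one) :: w); split => //=; rewrite limg1.
Qed.


Lemma csetT (P : Type) (mul : P -> P -> P) one (h1l : forall a, mul one a = a) :
  constructible mul setT.
Proof. by right; exists [:: (one, one)]; split => //=; rewrite limg1 ?lpre1. Qed.

Lemma conjq (P : Type) (mul : P -> P -> P) one (h1l : forall a, mul one a = a)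
  (R : nzRingType) (star : R -> R) (v : P -> R) (e : set P -> R)
  (hrel : Cstar_P_relations mul star v e) q X :
  constructible mul X -> star (v q) * e X * v q = e (lpre mul q X).
Proof.
move: hrel => [hM [hSS [hSD [hiso [hv [hEs [hconj [h0 [h1 hprod]]]]]]]]] cX.
have cT := csetT h1l.
have eqP' : e (Defs.limg mul q setT) = v q * star (v q).
  by rewrite -hconj // h1 mulr1.
have vq : v q = e (Defs.limg mul q setT) * v q by rewrite eqP' -mulrA hiso mulr1.
have cL := clpre h1l q cX.
have XI : X `&` Defs.limg mul q setT = Defs.limg mul q (lpre mul q X).
  apply/seteqP; split=> x /=.
  - by case=> Xx [z _ E]; exists z => //; rewrite /lpre /= E.
  - by case=> z Lz <-; split => //; exists z.
rewrite {2}vq mulrA -(mulrA _ (e X)) hprod ?(climg h1l q) ?cT //.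
  have -> : e (X `&` Defs.limg mul q [set: P]) = e (Defs.limg mul q (lpre mul q X)).
    by congr e.
  rewrite -hconj //.
  by rewrite !mulrA hiso mul1r -mulrA hiso mulr1.
exact: climg.
Qed.

Fixpoint G (P : Type) (mul : P -> P -> P) (w : seq (P * P)) (X : set P) : set P :=
  match w with
  | [::] => X
  | (p, q) :: w' => G mul w' (lpre mul q (Defs.limg mul p X))
  end.

Lemma Gc (P : Type) (mul : P -> P -> P) one (h1l : forall a, mul one a = a) w X :
  constructible mul X -> constructible mul (G mul w X).
Proof.
elim: w X => [//|[p q] w IH] X cX /=.
by apply: IH; apply: (clpre h1l); apply: (climg h1l).
Qed.

Lemma GU (P : Type) (mul : P -> P -> P) w X Y :
  G mul w (X `|` Y) = G mul w X `|` G mul w Y.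
Proof. by elim: w X Y => [//|[p q] w IH] X Y /=; rewrite limgU lpreU IH. Qed.

Lemma GI (P : Type) (mul : P -> P -> P)
  (hcan : forall a b c, mul a b = mul a c -> b = c) w X Y :
  G mul w (X `&` Y) = G mul w X `&` G mul w Y.
Proof. by elim: w X Y => [//|[p q] w IH] X Y /=; rewrite limgI // lpreI IH. Qed.

Lemma Gconj (P : Type) (mul : P -> P -> P) one (h1l : forall a, mul one a = a)
  (R : nzRingType) (star : R -> R) (v : P -> R) (e : set P -> R)
  (hrel : Cstar_P_relations mul star v e) w X :
  constructible mul X ->
  star (word_elt star v w) * e X * word_elt star v w = e (G mul w X).
Proof.
have hrel' := hrel.
move: hrel' => [hM [hSS [hSD [hiso [hv [hEs [hconj [h0 [h1 hprod]]]]]]]]].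
elim: w X => [|[p q] w IH] X cX /=.
  have s1 : star 1 = 1 by rewrite -[star 1]mulr1 -{2}(hSS 1) -hM mulr1 hSS.
  by rewrite s1 mul1r mulr1.
rewrite !hM hSS -IH; last by apply: (clpre h1l); apply: (climg h1l).
rewrite -(conjq h1l hrel) ?(climg h1l) //.
rewrite -(hconj p X cX).
  by rewrite !mulrA.
exact: (climg h1l p cX).
Qed.

Lemma cIw (P : Type) (mul : P -> P -> P) one (h1l : forall a, mul one a = a)
  (hcan : forall a b c, mul a b = mul a c -> b = c) w X :
  constructible mul X -> constructible mul (X `&` word_ideal mul w).
Proof.
elim: w X => [|[p q] w IH] X cX /=; first by rewrite setIT.
have -> : X `&` lpre mul p (Defs.limg mul q (word_ideal mul w)) =
  lpre mul p (Defs.limg mul q (lpre mul q (Defs.limg mul p X) `&` word_ideal mul w)).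
  apply/seteqP; split=> x /=.
  - case=> Xx [y Wy E]; exists y => //; split => //.
    by rewrite /lpre /= E; exists x.
  - case=> y [[x' Xx' E'] Wy] E; split; last by exists y.
    by rewrite E in E'; rewrite -(hcan _ _ _ E').
apply: (clpre h1l); apply: (climg h1l); apply: IH.
by apply: (clpre h1l); apply: (climg h1l).
Qed.

Lemma cI (P : Type) (mul : P -> P -> P) one (h1l : forall a, mul one a = a)
  (hcan : forall a b c, mul a b = mul a c -> b = c) X Y :
  constructible mul X -> constructible mul Y -> constructible mul (X `&` Y).
Proof.
move=> cX [->|[w [_ ->]]]; first by left; rewrite setI0.
exact: (cIw h1l hcan).
Qed.

Theorem mainTheorem2 (P : countType) (mul : P -> P -> P) (one : P)
  (R : nzRingType) (star : R -> R) (v : P -> R) (e : set P -> R)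
  (hP : unital_left_cancellative mul one)
  (hrel : Cstar_P_relations mul star v e)
  (s : R) (hs : in_S star v s)
  (phi : R -> int) (hphi : in_spectrum mul e phi)
  (hadd : forall X Y, constructible mul X -> constructible mul Y ->
     constructible mul (X `|` Y) ->
     phi (e (X `|` Y)) = phi (e X) + phi (e Y) - phi (e (X `&` Y))) :
  forall X Y, constructible mul X -> constructible mul Y ->
     constructible mul (X `|` Y) ->
     phi (star s * e (X `|` Y) * s) =
       phi (star s * e X * s) + phi (star s * e Y * s) - phi (star s * e (X `&` Y) * s).
Proof.
move=> X Y cX cY cU.
have [_ [h1l [_ hcan]]] := hP.
case: hs => [->|[w [_ ->]]].
  rewrite !mulr0.
  by case: hphi => _ -> _ _.
rewrite !(Gconj h1l hrel) //; last exact: (cI h1l hcan).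
rewrite GU GI //; apply: hadd; rewrite -?GU; exact: (Gc h1l).
Qed.
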